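(* Let $D$ be a finite digraph and let $T$ be a maximum induced acyclic subdigraph of $D$ (i.e., $V(T)$ is a vertex set of maximum size such that $D[V(T)]$ is acyclic). Then there exists a path partition $\mathcal{P}$ of $D$ orthogonal to $T$, that is, every path of $\mathcal{P}$ contains exactly one vertex of $T$.
   Context: A path partition of $D$ is a collection of vertex-disjoint directed paths of $D$ covering $V(D)$. *)

(* Defs.v *)
From mathcomp Require Import all_boot.
Set Implicit Arguments. Unset Strict Implicit. Unset Printing Implicit Defensive.

(* A finite digraph: vertex type V : finType, arc relation E : rel V
   (loopless: irreflexive; E x y means an arc x -> y). *)

Definition dicycle (V : finType) (E : rel V) (c : seq V) : bool :=
  [&& c != [::], uniq c & cycle E c].

Definition acyclic_set (V : finType) (E : rel V) (S : {set V}) : Prop :=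
  forall c : seq V, all (fun x => x \in S) c -> ~~ dicycle E c.

Definition max_acyclic_set (V : finType) (E : rel V) (S : {set V}) : Prop :=
  acyclic_set E S /\ forall S' : {set V}, acyclic_set E S' -> #|S'| <= #|S|.

Definition dipath (V : finType) (E : rel V) (p : seq V) : bool :=
  match p with
  | [::] => false
  | x :: q => uniq p && path E x q
  end.

Definition path_partition (V : finType) (E : rel V) (P : seq (seq V)) : Prop :=
  all (dipath E) P /\ perm_eq (flatten P) (enum V).

Definition orthogonal (V : finType) (P : seq (seq V)) (S : {set V}) : Prop :=
  forall p, p \in P -> count (fun x => x \in S) p = 1.

(* Main.v *)
Require Import Defs.
From mathcomp Require Import all_boot.
From mathcomp Require Import zify.
From Stdlib Require Import Lia.
Set Implicit Arguments. Unset Strict Implicit. Unset Printing Implicit Defensive.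
Definition nbh (A B : finType) (R : A -> B -> bool) (X : {set A}) : {set B} :=
  [set b | [exists a in X, R a b]].

Lemma nbhU (A B : finType) (R : A -> B -> bool) (X Y : {set A}) :
  nbh R (X :|: Y) = nbh R X :|: nbh R Y.
Proof.
apply/setP=> b; rewrite !inE; apply/existsP/orP.
- by case=> a /andP[]; rewrite inE => /orP[] Ha Rab; [left|right]; apply/existsP; exists a; rewrite Ha.
- by case=> /existsP[a /andP[Ha Rab]]; exists a; rewrite inE Ha ?orbT.
Qed.

Lemma card_UD (T : finType) (A B : {set T}) : #|A :|: B| = #|A| + #|B :\: A|.
Proof.
rewrite cardsU cardsD setIC.
have := subset_leq_card (subsetIl A B). have := subset_leq_card (subsetIr A B).
rewrite -(cardsID A B). lia.
Qed.

Lemma hall (A B : finType) (b0 : B) : forall n (R : A -> B -> bool) (S : {set A}),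
  #|S| <= n -> (forall X : {set A}, X \subset S -> #|X| <= #|nbh R X|) ->
  exists f : A -> B, {in S &, injective f} /\ {in S, forall a, R a (f a)}.
Proof.
elim=> [|n IH] R S.
  rewrite leqn0 cards_eq0 => /eqP -> _.
  by exists (fun _ => b0); split=> a; rewrite inE.
move=> HS Hall.
case: (set_0Vmem S) => [-> | [a0 Ha0]].
  by exists (fun _ => b0); split=> a; rewrite inE.
case: (boolP [exists X : {set A}, [&& X \subset S, X != set0, X != S & #|nbh R X| <= #|X|]]).
- case/existsP=> X /and4P[sXS nX0 nXS tX].
  have pXS : X \proper S by rewrite properEneq nXS.
  have cX : #|X| <= n.
    by rewrite -ltnS; apply: leq_trans HS; apply: proper_card.
  have [f1 [inj1 R1]] := IH R X cX (fun Y sYX => Hall Y (subset_trans sYX sXS)).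
  set R2 := fun a b => R a b && (b \notin nbh R X).
  have cSX : #|S :\: X| <= n.
    rewrite cardsDS //.
    have : 0 < #|X| by rewrite card_gt0.
    move: HS; lia.
  have H2 : forall Y : {set A}, Y \subset S :\: X -> #|Y| <= #|nbh R2 Y|.
    move=> Y sY.
    have e2 : nbh R2 Y = nbh R Y :\: nbh R X.
      apply/setP=> b; rewrite /R2 !inE; case: [exists a in X, R a b] => /=.
        by apply/negbTE; rewrite negb_exists; apply/forallP=> a; rewrite !andbF.
      by apply: eq_existsb => a; rewrite !andbT.
    have := Hall (X :|: Y).
    rewrite subUset sXS (subset_trans sY (subsetDl _ _)) => /(_ isT).
    rewrite nbhU card_UD card_UD e2.
    have -> : Y :\: X = Y.
      apply/setP=> a; rewrite inE andbC; case Ya: (a \in Y) => //=.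
      by have := subsetP sY a Ya; rewrite inE => /andP[].
    move: tX; lia.
  have [f2 [inj2 R2f]] := IH R2 (S :\: X) cSX H2.
  exists (fun a => if a \in X then f1 a else f2 a); split.
  + move=> a b Ha Hb.
    have nbhI : forall c, c \in X -> f1 c \in nbh R X.
      by move=> c Hc; rewrite inE; apply/existsP; exists c; rewrite Hc R1.
    have nbhO : forall c, c \in S -> c \notin X -> f2 c \notin nbh R X.
      by move=> c Hc Hc'; have := R2f c; rewrite inE Hc Hc' => /(_ isT) /andP[].
    case: (boolP (a \in X)) => Xa; case: (boolP (b \in X)) => Xb.
    * exact: inj1.
    * by move=> e; move: (nbhI a Xa) (nbhO b Hb Xb); rewrite e => ->.
    * by move=> e; move: (nbhI b Xb) (nbhO a Ha Xa); rewrite e => ->.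
    * by apply: inj2; rewrite inE ?Xa ?Xb.
  + move=> a Ha; case: (boolP (a \in X)) => Xa; first exact: R1.
    by have := R2f a; rewrite inE Xa Ha => /(_ isT) /andP[].
- rewrite negb_exists => /forallP nT.
  have : 1 <= #|nbh R [set a0]| by rewrite -(cards1 a0) Hall // sub1set.
  rewrite card_gt0 => /set0Pn[b0' ].
  rewrite inE => /existsP[a1 /andP[]]; rewrite inE => /eqP -> Rab.
  set R1 := fun a b => R a b && (b != b0').
  have cS1 : #|S :\ a0| <= n by move: HS; rewrite (cardsD1 a0 S) Ha0.
  have H1 : forall Y : {set A}, Y \subset S :\ a0 -> #|Y| <= #|nbh R1 Y|.
    move=> Y sY.
    case: (set_0Vmem Y) => [-> | [y Hy]]; first by rewrite cards0.
    have := nT Y.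
    have -> : Y \subset S by apply: subset_trans sY (subsetDl _ _).
    have -> : Y != set0 by apply/set0Pn; exists y.
    have -> : Y != S.
      apply/eqP=> eYS; move/subsetP: sY => /(_ a0); rewrite eYS Ha0 => /(_ isT).
      by rewrite !inE eqxx.
    rewrite /= -ltnNge => lt.
    have sub : nbh R Y :\ b0' \subset nbh R1 Y.
      apply/subsetP=> b; rewrite !inE => /andP[nb /existsP[a /andP[Ha Rb]]].
      by apply/existsP; exists a; rewrite Ha /R1 Rb nb.
    apply: leq_trans (subset_leq_card sub).
    move: lt; rewrite (cardsD1 b0' (nbh R Y)); case: (b0' \in nbh R Y) => /=; lia.
  have [f1 [inj1 Rf1]] := IH R1 (S :\ a0) cS1 H1.
  exists (fun a => if a == a0 then b0' else f1 a); split.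
  + move=> a b Ha Hb /=.
    have nb : forall c, c \in S -> c != a0 -> f1 c != b0'.
      by move=> c Hc Hc'; have := Rf1 c; rewrite !inE Hc Hc' => /(_ isT) /andP[].
    case: (eqVneq a a0) => [->|na]; case: (eqVneq b a0) => [->|nb'] //.
    * by move=> e; move: (nb b Hb nb'); rewrite -e eqxx.
    * by move=> e; move: (nb a Ha na); rewrite e eqxx.
    * by apply: inj1; rewrite !inE ?na ?nb' ?Ha ?Hb.
  + move=> a Ha /=; case: (eqVneq a a0) => [->|na] //.
    by have := Rf1 a; rewrite !inE na Ha => /(_ isT) /andP[].
Qed.
Section Build.
Variables (V : finType) (E : rel V) (T : {set V}) (f : V -> V).
Hypothesis finj : {in ~: T &, injective f}.
Hypothesis fR : forall u, u \notin T ->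
  E u (f u) && ((f u \in T) || (enum_rank (f u) < enum_rank u)).

Definition Rf (x y : V) := (x \notin T) && (f x == y).
Definition good (p : seq V) :=
  if p is x :: q then path Rf x q && (last x q \in T) else false.

Lemma pred_in (x : V) q y : path Rf x q -> y \in q -> exists2 z, z \in x :: q & Rf z y.
Proof.
elim: q x => [|y' q IH] x //= /andP[Rxy' pq].
rewrite inE => /orP[/eqP -> | yq]; first by exists x; rewrite ?inE ?eqxx.
by have [z zin Rz] := IH y' pq yq; exists z; rewrite // inE zin orbT.
Qed.

Lemma good_count p : good p -> count (fun x => x \in T) p = 1.
Proof.
case: p => // x q /=; elim: q x => [|y q IH] x /=; first by move=> ->.
by case/andP=> /andP[/andP[xT _] pq] lq; rewrite (negbTE xT) IH // pq.
Qed.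

Lemma good_dipath p : good p -> uniq p -> dipath E p.
Proof.
case: p => // x q /= /andP[pq _] uq; rewrite /dipath uq /=.
apply: sub_path pq => a b /andP[aT /eqP <-].
by case/andP: (fR aT).
Qed.

Definition inv n (P : seq (seq V)) :=
  [/\ all good P, uniq (flatten P) &
      flatten P =i [pred x | (x \in T) || ((x \notin T) && (enum_rank x < n))]].

Lemma inv_ex n : exists P, inv n P.
Proof.
elim: n => [|n [P [gP uP mP]]].
  exists [seq [:: t] | t <- enum T]; split.
  - by apply/allP=> p /mapP[t]; rewrite mem_enum => tT ->; rewrite /= tT.
  - by rewrite flatten_seq1 enum_uniq.
  - by move=> x; rewrite flatten_seq1 mem_enum !inE andbF orbF.
case: (ltnP n #|V|) => [ltnV | gen]; last first.
  exists P; split=> // x; rewrite mP !inE.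
  have h1 : enum_rank x < n by apply: leq_trans (ltn_ord _) gen.
  by rewrite h1 ltnS (ltnW h1).
set v := enum_val (Ordinal ltnV).
have rv : enum_rank v = n :> nat by rewrite /v enum_valK.
have rk : forall x, (enum_rank x < n.+1) = (enum_rank x < n) || (x == v).
  move=> x; rewrite ltnS leq_eqVlt orbC; congr (_ || _).
  apply/eqP/eqP=> [e|->] //; apply: enum_rank_inj; apply: val_inj => /=; rewrite e rv.
  by [].
case: (boolP (v \in T)) => vT.
  exists P; split=> // x; rewrite mP !inE rk.
  by case: (eqVneq x v) => [->|]; rewrite ?vT ?orbF.
have vnP : v \notin flatten P by rewrite mP !inE (negbTE vT) rv ltnn.
have /andP[Evy hy] := fR vT.
set y := f v in Evy hy.
have yP : y \in flatten P.
  rewrite mP !inE; case: (boolP (y \in T)) => //= yT.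
  by move: hy; rewrite (negbTE yT) rv.
case/flattenP: yP => p pP yp.
have gp : good p by apply: (allP gP).
have pP' : forall z, z \in p -> z \in flatten P by move=> z zp; apply/flattenP; exists p.
case: p gp yp pP pP' => // x q gp yp pP pP'.
have exy : x = y.
  case: (eqVneq x y) => // nxy.
  move: yp; rewrite inE eq_sym (negbTE nxy) /= => yq.
  case/andP: gp => pq _.
  have [z zin /andP[zT /eqP fz]] := pred_in pq yq.
  have zv : z = v by apply: finj; rewrite ?inE.
  by move: (pP' z zin); rewrite zv (negbTE vnP).
subst x.
have perm1 : perm_eq (flatten ((v :: y :: q) :: rem (y :: q) P)) (v :: flatten P).
  rewrite /= -cat_cons perm_cons.
  have := perm_flatten (perm_to_rem pP); rewrite /= => h.
  by rewrite perm_sym.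
exists ((v :: y :: q) :: rem (y :: q) P); split.
- rewrite /= andbC; apply/andP; split.
    by apply/allP=> p /mem_rem pin; apply: (allP gP).
  by rewrite /Rf vT eqxx.
- by rewrite (perm_uniq perm1) /= vnP.
- move=> z; rewrite (perm_mem perm1) inE mP !inE rk.
  case: (eqVneq z v) => [->|]; rewrite ?vT ?orbT ?orbF //.
Qed.

Lemma build : exists P, path_partition E P /\ orthogonal P T.
Proof.
have [P [gP uP mP]] := inv_ex #|V|.
exists P; split; last first.
  by move=> p pP; apply: good_count; apply: (allP gP).
split.
  apply/allP=> p pP; apply: good_dipath; first exact: (allP gP).
  have := perm_flatten (perm_to_rem pP); rewrite /= => h.
  by move: uP; rewrite (perm_uniq h) cat_uniq => /and3P[].
apply: uniq_perm => //; first exact: enum_uniq.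
move=> x; rewrite mP mem_enum !inE.
by case: (x \in T) => //=; rewrite ltn_ord.
Qed.
End Build.

Theorem mainTheorem3 (V : finType) (E : rel V) (irrE : irreflexive E)
  (T : {set V}) (hT : max_acyclic_set E T) :
  exists P : seq (seq V), path_partition E P /\ orthogonal P T.
Proof.
case: (pickP (fun _ : V => true)) => [v0 _ | hV]; last first.
  exists [::]; split=> //; split=> //=.
  apply: uniq_perm => //; first exact: enum_uniq.
  by move=> x; rewrite mem_enum; have := hV x.
set R := fun u x : V => E u x && ((x \in T) || (enum_rank x < enum_rank u)).
have HH : forall X : {set V}, X \subset ~: T -> #|X| <= #|nbh R X|.
  move=> X sX; rewrite leqNgt; apply/negP => lt.
  set N := nbh R X.
  set X' := X :\: N.
  set S' := X' :|: (T :\: N).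
  have XT : forall z, z \in X -> z \notin T.
    by move=> z /(subsetP sX); rewrite inE.
  have inN : forall z w, z \in X -> R z w -> w \in N.
    by move=> z w zX Rzw; rewrite inE; apply/existsP; exists z; rewrite zX.
  have acS : acyclic_set E S'.
    move=> c allc; apply/negP => /and3P[c0 uc cyc].
    case: (boolP (has (fun z => z \in X') c)) => [/hasP[z0 z0c z0X] | nh].
      pose Pc := [pred z : V | (z \in c) && (z \in X')].
      have P0 : Pc z0 by rewrite /Pc inE z0c z0X.
      case: (arg_maxnP (fun z : V => enum_rank z : nat) P0) => z.
      rewrite /Pc inE => /andP[zc zX'] zmax.
      have Ezw := next_cycle cyc zc.
      set w := next c z in Ezw.
      have wc : w \in c by rewrite mem_next.
      have wS : w \in S' by apply: (allP allc).
      have zX : z \in X by move: zX'; rewrite inE => /andP[].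
      case: (boolP (w \in T)) => wT.
        have wN : w \in N by apply: (inN z); rewrite // /R Ezw wT.
        by move: wS; rewrite in_setU !in_setD wN.
      have wX' : w \in X' by move: wS; rewrite in_setU in_setD (negbTE wT) andbF orbF.
      have wXN : w \notin N by move: wX'; rewrite in_setD => /andP[].
      case: (ltnP (enum_rank w) (enum_rank z)) => hwz.
        by move: wXN; rewrite (inN z w zX) // /R Ezw hwz orbT.
      have := zmax w; rewrite /Pc inE wc wX' => /(_ isT) hzw.
      have ewz : w = z.
        apply: enum_rank_inj; apply: val_inj => /=.
        by apply: anti_leq; rewrite hwz andbT; exact: hzw.
      by move: Ezw; rewrite ewz irrE.
    have allT : all (fun x => x \in T) c.
      apply/allP=> x xc; have := allP allc x xc; rewrite in_setU.
      case/orP=> [xX'|]; last by rewrite in_setD => /andP[_ ->].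
      by move/hasPn: nh => /(_ x xc); rewrite xX'.
    by have := hT.1 c allT; rewrite /dicycle c0 uc cyc.
  have := hT.2 S' acS.
  have dis : X' :&: (T :\: N) = set0.
    apply/setP=> y; rewrite !inE; case: (boolP (y \in X)) => yX; last by rewrite !(andbF, andFb).
    by rewrite (negbTE (XT y yX)) !(andbF, andFb).
  have dis2 : (X :&: N) :&: (T :&: N) = set0.
    apply/setP=> y; rewrite !inE; case: (boolP (y \in X)) => yX; last by rewrite !(andbF, andFb).
    by rewrite (negbTE (XT y yX)) !(andbF, andFb).
  have sub2 : (X :&: N) :|: (T :&: N) \subset N.
    by rewrite subUset subsetIr subsetIr.
  have c1 := subset_leq_card sub2.
  rewrite cardsU dis2 cards0 in c1.
  rewrite /S' cardsU dis cards0 /X' !cardsD.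
  have := subset_leq_card (subsetIl X N).
  have := subset_leq_card (subsetIl T N).
  move: lt c1; rewrite -/N; lia.
have [f [finj fR]] := hall v0 (leqnn #|~: T|) HH.
apply: (build finj) => u uT.
by have := fR u; rewrite inE uT => /(_ isT).
Qed.
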